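(* For $-2<\psi<2$ let $E_\psi$ be the complex elliptic curve $y^2=4x^3-12x+4\psi$, and let $\delta_2\in H_1(E_\psi,\Z)$ be the class of the compact connected component (oval) of $E_\psi\cap\R^2$, oriented so that $\int_{\delta_2}\frac{dx}{y}>0$. Then $$\int_{\delta_2}\frac{dx}{y}=\frac{\pi}{\sqrt3}F\Big(\frac16,\frac56,1\Big|\frac{\psi+2}4\Big),\qquad \int_{\delta_2}\frac{xdx}{y}=-\frac{\pi}{\sqrt3}F\Big(-\frac16,\frac76,1\Big|\frac{\psi+2}4\Big),$$ where $F(a,b,c|z)=\sum_{n\ge0}\frac{(a)_n(b)_n}{(c)_n\,n!}z^n$ is the Gauss hypergeometric function and $(a)_n=a(a+1)\cdots(a+n-1)$. *)

(* Defs.v *)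
From Stdlib Require Import Reals Arith Factorial.
Open Scope R_scope.

Fixpoint poch (a : R) (n : nat) : R :=
  match n with
  | O => 1
  | S k => poch a k * (a + INR k)
  end.

Definition hyp_term (a b c z : R) (n : nat) : R :=
  poch a n * poch b n / (poch c n * INR (fact n)) * z ^ n.

Definition hyp2F1 (a b c z S : R) : Prop :=
  infinite_sum (hyp_term a b c z) S.

(* The cubic 4x^3 - 12x + 4psi, so that E_psi : y^2 = cubic psi x. *)
Definition cubic (psi x : R) : R := 4 * x ^ 3 - 12 * x + 4 * psi.

Definition improper_int (f : R -> R) (a b L : R) : Prop :=
  forall eps, eps > 0 -> exists d, d > 0 /\
    forall u v, a < u < a + d -> b - d < v < b ->
      exists pr : Riemann_integrable f u v, Rabs (RiemannInt pr - L) < eps.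

(* Main.v *)
Require Import Defs.
From Stdlib Require Import Reals Lra Lia Psatz Arith Factorial.
From Coquelicot Require Import Coquelicot.
Open Scope R_scope.

Lemma poch_pos_half : forall n, 0 < poch (1/2) n.
Proof. induction n; simpl; [lra|]. apply Rmult_lt_0_compat; auto. pose proof (pos_INR n); lra. Qed.

Lemma INR_fact_pos n : 0 < INR (fact n).
Proof. apply lt_0_INR, lt_O_fact. Qed.

Definition qc (a : R) (n : nat) : R :=
  poch ((1+a)/2) n * poch ((1-a)/2) n / (poch (1/2) n * INR (fact n)).

Lemma qc_0 a : qc a 0 = 1.
Proof. unfold qc; simpl; field. Qed.

Lemma qc_S a n : qc a (S n) = qc a n * (((1+a)/2 + INR n) * ((1-a)/2 + INR n)) / ((1/2 + INR n) * (INR n + 1)).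
Proof.
  unfold qc. simpl poch. rewrite fact_simpl, mult_INR, S_INR.
  pose proof (poch_pos_half n). pose proof (INR_fact_pos n). pose proof (pos_INR n).
  field. repeat split; lra.
Qed.

Lemma qc_bound a : a * a <= 3 -> forall n, Rabs (qc a n) <= 1.
Proof.
  intros Ha n. induction n.
  - rewrite qc_0, Rabs_R1; lra.
  - rewrite qc_S. pose proof (pos_INR n) as Hn.
    assert (Hd : 0 < (1/2 + INR n) * (INR n + 1)) by nra.
    set (D := (1/2 + INR n) * (INR n + 1)) in *.
    set (N := ((1 + a) / 2 + INR n) * ((1 - a) / 2 + INR n)).
    assert (HN : Rabs N <= D) by (apply Rabs_le; unfold N, D; split; nra).
    unfold Rdiv. rewrite Rabs_mult, Rabs_mult, Rabs_inv, (Rabs_right D) by lra.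
    pose proof (Rabs_pos (qc a n)). pose proof (Rabs_pos N).
    apply Rmult_le_reg_r with D; auto.
    rewrite Rmult_assoc, Rinv_l by lra. nra.
Qed.

Lemma qc_radius a : a * a <= 3 -> forall t, Rabs t < 1 -> Rbar_lt (Rabs t) (CV_radius (qc a)).
Proof.
  intros Ha t Ht.
  destruct (CV_radius_bounded (qc a)) as [Hub _].
  apply Rbar_lt_le_trans with (Finite ((Rabs t + 1)/2)).
  - simpl; lra.
  - apply Hub. exists 1. intro n. rewrite Rabs_mult, <- RPow_abs.
    pose proof (qc_bound a Ha n). pose proof (Rabs_pos (qc a n)).
    assert (0 <= Rabs ((Rabs t + 1) / 2) ^ n <= 1).
    { split. apply pow_le, Rabs_pos. rewrite <- (pow1 n) at 2. apply pow_incr. split. apply Rabs_pos.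
      pose proof (Rabs_pos t). rewrite (Rabs_right ((Rabs t + 1)/2)); lra. }
    nra.
Qed.

Definition Q0 a t := PSeries (qc a) t.
Definition Q1 a t := PSeries (PS_derive (qc a)) t.
Definition Q2 a t := PSeries (PS_derive (PS_derive (qc a))) t.

Lemma qc_radius1 a : a * a <= 3 -> forall t, Rabs t < 1 -> Rbar_lt (Rabs t) (CV_radius (PS_derive (qc a))).
Proof. intros; rewrite CV_radius_derive; apply qc_radius; auto. Qed.
Lemma qc_radius2 a : a * a <= 3 -> forall t, Rabs t < 1 -> Rbar_lt (Rabs t) (CV_radius (PS_derive (PS_derive (qc a)))).
Proof. intros; rewrite !CV_radius_derive; apply qc_radius; auto. Qed.

Lemma Q_ode a t : a * a <= 3 -> Rabs t < 1 ->
  t * (1 - t) * Q2 a t + (1/2 - 2 * t) * Q1 a t - ((1 - a * a)/4) * Q0 a t = 0.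
Proof.
  intros Ha Ht.
  pose proof (CV_radius_inside _ _ (qc_radius a Ha t Ht)) as E0.
  pose proof (CV_radius_inside _ _ (qc_radius1 a Ha t Ht)) as E1.
  pose proof (CV_radius_inside _ _ (qc_radius2 a Ha t Ht)) as E2.
  set (q := qc a) in *.
  set (q1 := PS_derive q) in *. set (q2 := PS_derive q1) in *.
  unfold Q0, Q1, Q2. fold q q1 q2.
  assert (Hm : forall (c : R) (b : nat -> R), ex_pseries b t -> ex_pseries (PS_scal c b) t).
  { intros c b Hb. apply ex_pseries_scal; auto. apply Rmult_comm. }
  transitivity (PSeries (PS_plus (PS_incr_1 q2) (PS_plus (PS_scal (-1) (PS_incr_1 (PS_incr_1 q2)))
     (PS_plus (PS_scal (1/2) q1) (PS_plus (PS_scal (-2) (PS_incr_1 q1)) (PS_scal (-((1 - a*a)/4)) q))))) t).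
  - assert (I1 := ex_pseries_incr_1 _ _ E1).
    assert (I2 := ex_pseries_incr_1 _ _ E2).
    assert (I22 := ex_pseries_incr_1 _ _ I2).
    rewrite PSeries_plus; [|exact I2|].
    2:{ apply ex_pseries_plus. apply Hm, I22. apply ex_pseries_plus. apply Hm, E1.
        apply ex_pseries_plus. apply Hm, I1. apply Hm, E0. }
    rewrite PSeries_plus; [|apply Hm, I22|].
    2:{ apply ex_pseries_plus. apply Hm, E1.
        apply ex_pseries_plus. apply Hm, I1. apply Hm, E0. }
    rewrite PSeries_plus; [|apply Hm, E1|].
    2:{ apply ex_pseries_plus. apply Hm, I1. apply Hm, E0. }
    rewrite PSeries_plus; [|apply Hm, I1|apply Hm, E0].
    rewrite !PSeries_scal, !PSeries_incr_1. ring.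
  - rewrite <- (PSeries_const_0 t). apply PSeries_ext. intro n.
    unfold PS_plus, PS_scal, PS_incr_1, q2, q1, PS_derive, plus, scal, mult, zero; cbn -[INR qc].
    destruct n as [|[|m]].
    + unfold q. rewrite qc_S, qc_0. simpl INR. field.
    + unfold q. rewrite (qc_S a 1), qc_S, qc_0. simpl INR. field.
    + unfold q. rewrite (qc_S a (S (S m))). rewrite !S_INR.
      pose proof (pos_INR m). field. lra.
Qed.

Lemma sin2_lt1 b : -PI/2 < b < PI/2 -> Rabs (sin b ^ 2) < 1.
Proof.
  intros Hb. assert (Hc : 0 < cos b) by (apply cos_gt_0; lra).
  pose proof (sin2_cos2 b). unfold Rsqr in *.
  rewrite Rabs_right by nra. nra.
Qed.

Lemma Q0_der a t : a * a <= 3 -> Rabs t < 1 -> is_derive (Q0 a) t (Q1 a t).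
Proof. intros; apply is_derive_PSeries, qc_radius; auto. Qed.
Lemma Q1_der a t : a * a <= 3 -> Rabs t < 1 -> is_derive (Q1 a) t (Q2 a t).
Proof. intros; apply is_derive_PSeries, qc_radius1; auto. Qed.

Lemma DQ0 a t : a * a <= 3 -> Rabs t < 1 -> Derive (fun x : R => Q0 a x) t = Q1 a t.
Proof. intros; apply is_derive_unique, Q0_der; auto. Qed.
Lemma DQ1 a t : a * a <= 3 -> Rabs t < 1 -> Derive (fun x : R => Q1 a x) t = Q2 a t.
Proof. intros; apply is_derive_unique, Q1_der; auto. Qed.

Definition UU a x := Q0 a (sin x ^ 2) * cos x.
Definition VV a x := - / a * (2 * sin x * cos x ^ 2 * Q1 a (sin x ^ 2) - sin x * Q0 a (sin x ^ 2)).

Lemma UU_der a b : a * a <= 3 -> a <> 0 -> -PI/2 < b < PI/2 -> is_derive (UU a) b (- a * VV a b).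
Proof.
  intros Ha Ha0 Hb. pose proof (sin2_lt1 b Hb) as Ht. unfold UU, VV.
  auto_derive.
  - exists (Q1 a (sin b ^ 2)). apply Q0_der; auto.
  - change (sin b * (sin b * 1)) with (sin b ^ 2).
    rewrite DQ0 by auto. field. auto.
Qed.

Lemma c2_trick s c x y k : c ^ 2 = 1 - s ^ 2 -> x - y = (c^2 - (1 - s^2)) * k -> x = y.
Proof. intros H1 H2. rewrite H1 in H2. lra. Qed.

Lemma VV_der a b : a * a <= 3 -> a <> 0 -> -PI/2 < b < PI/2 -> is_derive (VV a) b (a * UU a b).
Proof.
  intros Ha Ha0 Hb. pose proof (sin2_lt1 b Hb) as Ht. pose proof (Q_ode a _ Ha Ht) as Hode.
  assert (Hc : cos b ^ 2 = 1 - sin b ^ 2) by (pose proof (sin2_cos2 b); unfold Rsqr in *; lra).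
  unfold UU, VV.
  auto_derive.
  - split. exists (Q2 a (sin b ^ 2)). apply Q1_der; auto.
    split. exists (Q1 a (sin b ^ 2)). apply Q0_der; auto. auto.
  - change (sin b * (sin b * 1)) with (sin b ^ 2).
    rewrite DQ0, DQ1 by auto.
    apply (c2_trick (sin b) (cos b) _ _ (- / a * cos b * (2 * Q1 a (sin b ^ 2) + 4 * sin b ^ 2 * Q2 a (sin b ^ 2))) Hc).
    transitivity (- / a * cos b * 4 * (sin b ^ 2 * (1 - sin b ^ 2) * Q2 a (sin b ^ 2) + (1 / 2 - 2 * sin b ^ 2) * Q1 a (sin b ^ 2) -
       (1 - a * a) / 4 * Q0 a (sin b ^ 2)) + (- / a * cos b * (2 * Q1 a (sin b ^ 2) + 4 * sin b ^ 2 * Q2 a (sin b ^ 2))) * (cos b ^ 2 - (1 - sin b ^ 2))).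
    + field. auto.
    + rewrite Hode. ring.
Qed.

Lemma UU_cos a b : a * a <= 3 -> a <> 0 -> -PI/2 < b < PI/2 -> UU a b = cos (a * b).
Proof.
  intros Ha Ha0 Hb.
  set (E := fun x => (UU a x - cos (a * x)) ^ 2 + (VV a x - sin (a * x)) ^ 2).
  assert (HE : forall x, -PI/2 < x < PI/2 -> is_derive E x 0).
  { intros x Hx. unfold E.
    assert (HU := UU_der a x Ha Ha0 Hx). assert (HV := VV_der a x Ha Ha0 Hx).
    auto_derive.
    - split. exists (- a * VV a x); exact HU. split; auto. exists (a * UU a x); exact HV.
    - assert (DU : Derive (fun y : R => UU a y) x = - a * VV a x) by (apply is_derive_unique; exact HU).
      assert (DV : Derive (fun y : R => VV a y) x = a * UU a x) by (apply is_derive_unique; exact HV).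
      rewrite DU, DV. ring. }
  assert (HE0 : E 0 = 0).
  { unfold E, UU, VV. rewrite sin_0, cos_0, Rmult_0_r, sin_0, cos_0.
    replace (0 ^ 2) with 0 by ring. unfold Q0. rewrite PSeries_0, qc_0. ring. }
  assert (PI2 : 0 < PI) by apply PI_RGT_0.
  destruct (MVT_gen E 0 b (fun _ => 0)) as [c [Hc HEc]].
  - intros x Hx. apply HE. split.
    + apply Rlt_le_trans with (Rmin 0 b). unfold Rmin; destruct Rle_dec; lra. lra.
    + apply Rle_lt_trans with (Rmax 0 b). lra. unfold Rmax; destruct Rle_dec; lra.
  - intros x Hx. apply derivable_continuous_pt. exists 0. apply is_derive_Reals, HE. split.
    + apply Rlt_le_trans with (Rmin 0 b). unfold Rmin; destruct Rle_dec; lra. lra.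
    + apply Rle_lt_trans with (Rmax 0 b). lra. unfold Rmax; destruct Rle_dec; lra.
  - rewrite HE0, Rmult_0_l in HEc. unfold E in HEc.
    assert (H1 : 0 <= (UU a b - cos (a * b)) ^ 2) by apply pow2_ge_0.
    assert (H2 : 0 <= (VV a b - sin (a * b)) ^ 2) by apply pow2_ge_0.
    assert (H3 : (UU a b - cos (a * b)) ^ 2 = 0) by lra.
    assert (UU a b - cos (a * b) = 0) by nra. lra.
Qed.


Lemma exd_cont (f : R -> R) x : ex_derive f x -> continuous f x.
Proof. intro H. apply (ex_derive_continuous (K := R_AbsRing) (V := R_NormedModule) f x H). Qed.

Lemma wallis_alg s c S m : c * c = 1 - s * s ->
  1 * c * (((1 + 1) * m + 1) * S) * c + s * S * (1 * - s) = (2 * m + 1) * S - (2 * m + 2) * (s * (s * S)).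
Proof. intros H. replace (1 * c * (((1 + 1) * m + 1) * S) * c) with (((1 + 1) * m + 1) * S * (c * c)) by ring.
  rewrite H. ring. Qed.

Lemma wallis_step n W : is_RInt (fun t => sin t ^ (2*n)) (-PI/2) (PI/2) W ->
  is_RInt (fun t => sin t ^ (2*(S n))) (-PI/2) (PI/2) ((2 * INR n + 1) / (2 * INR n + 2) * W).
Proof.
  intros HW.
  assert (Hd : is_RInt (fun t => (2 * INR n + 1) * sin t ^ (2*n) - (2 * INR n + 2) * sin t ^ (2 * S n)) (-PI/2) (PI/2) 0).
  { replace 0 with (minus (sin (PI/2) ^ (2*n+1) * cos (PI/2)) (sin (-PI/2) ^ (2*n+1) * cos (-PI/2))).
    2:{ replace (-PI/2) with (- (PI/2)) by field. rewrite cos_neg, cos_PI2. unfold minus, plus, opp; simpl. ring. }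
    apply (is_RInt_derive (fun t => sin t ^ (2*n+1) * cos t)).
    - intros x _. auto_derive; auto.
      replace (n + (n + 0) + 1)%nat with (S (2 * n)) by lia.
      replace (2 * S n)%nat with (S (S (2 * n))) by lia.
      pose proof (sin2_cos2 x) as Hsc. unfold Rsqr in Hsc.
      rewrite S_INR, mult_INR. simpl INR. cbn [Init.Nat.pred].
      change (sin x ^ S (S (2*n))) with (sin x * (sin x * sin x ^ (2*n))).
      change (sin x ^ S (2*n)) with (sin x * sin x ^ (2*n)).
      apply wallis_alg; lra.
    - intros x _. apply exd_cont. auto_derive. auto. }
  pose proof (is_RInt_scal _ _ _ (2 * INR n + 1) _ HW) as H1.
  pose proof (is_RInt_minus _ _ _ _ _ _ H1 Hd) as H2.
  pose proof (is_RInt_scal _ _ _ (/ (2 * INR n + 2)) _ H2) as H3.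
  pose proof (pos_INR n).
  eapply is_RInt_ext; [|replace ((2 * INR n + 1) / (2 * INR n + 2) * W) with (scal (/ (2 * INR n + 2)) (minus (scal (2 * INR n + 1) W) 0)); [exact H3|]].
  - intros x _. unfold scal, minus, plus, opp; simpl. unfold mult; simpl. field. lra.
  - unfold scal, minus, plus, opp; simpl. unfold mult; simpl. field. lra.
Qed.

Lemma wallis n : is_RInt (fun t => sin t ^ (2*n)) (-PI/2) (PI/2) (PI * poch (1/2) n / INR (fact n)).
Proof.
  induction n.
  - simpl. replace (PI * 1 / 1) with (scal (PI/2 - - PI/2) 1).
    apply (is_RInt_const (V := R_NormedModule)). unfold scal; simpl; unfold mult; simpl. field.
  - replace (PI * poch (1 / 2) (S n) / INR (fact (S n))) with
      ((2 * INR n + 1) / (2 * INR n + 2) * (PI * poch (1 / 2) n / INR (fact n))).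
    apply wallis_step; auto.
    simpl poch. rewrite fact_simpl, mult_INR, S_INR.
    assert (0 < INR (fact n)) by (apply lt_0_INR, lt_O_fact).
    pose proof (pos_INR n). field. lra.
Qed.


Lemma Q0_cv a x : a * a <= 3 -> Rabs x < 1 ->
  Un_cv (fun n => sum_f_R0 (fun k => qc a k * x ^ k) n) (Q0 a x).
Proof.
  intros Ha Hx.
  pose proof (CV_radius_inside _ _ (qc_radius a Ha x Hx)) as E.
  assert (E' : ex_series (fun k => qc a k * x ^ k)).
  { revert E. apply ex_series_ext. intro n. rewrite pow_n_pow. unfold scal; simpl; unfold mult; simpl. ring. }
  pose proof (Series_correct _ E') as HS.
  apply is_series_Reals in HS. exact HS.
Qed.

Lemma Q0_tail a x z N : a * a <= 3 -> 0 <= z < 1 -> Rabs x <= z ->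
  Rabs (Q0 a x - sum_f_R0 (fun k => qc a k * x ^ k) N) <= z ^ (S N) / (1 - z).
Proof.
  intros Ha Hz Hx.
  assert (Hx1 : Rabs x < 1) by lra.
  assert (HG : Un_cv (fun n => sum_f_R0 (fun k => z ^ k) n) (/ (1 - z))).
  { intros eps He. destruct (GP_infinite z ltac:(rewrite Rabs_right; lra) eps He) as [N0 HN].
    exists N0. intros n Hn. specialize (HN n Hn). rewrite (sum_eq _ (fun k => 1 * z ^ k)); auto.
    intros; ring. }
  pose proof (sum_maj1 (fun k y => qc a k * y ^ k) (fun k => z ^ k) x (Q0 a x) (/ (1 - z)) N
    (Q0_cv a x Ha Hx1) HG) as H.
  unfold SP in H.
  rewrite tech3 in H by lra.
  replace (z ^ S N / (1 - z)) with (/ (1 - z) - (1 - z ^ S N) / (1 - z)) by (field; lra).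
  apply H. intro n. rewrite Rabs_mult, <- RPow_abs.
  pose proof (qc_bound a Ha n). pose proof (Rabs_pos (qc a n)).
  assert (Rabs x ^ n <= z ^ n) by (apply pow_incr; split; [apply Rabs_pos|auto]).
  assert (0 <= Rabs x ^ n) by (apply pow_le, Rabs_pos).
  nra.
Qed.

Lemma sin2_bound t : 0 <= sin t ^ 2 <= 1.
Proof. pose proof (sin2_cos2 t). unfold Rsqr in H. split; nra. Qed.

Lemma zsin_bound z t : 0 <= z < 1 -> Rabs (z * sin t ^ 2) <= z.
Proof. intros Hz. pose proof (sin2_bound t). rewrite Rabs_right by nra. nra. Qed.

Lemma Fz_exd a z t : a * a <= 3 -> 0 <= z < 1 -> ex_derive (fun t => Q0 a (z * sin t ^ 2)) t.
Proof.
  intros Ha Hz. pose proof (zsin_bound z t Hz).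
  auto_derive. exists (Q1 a (z * sin t ^ 2)). apply Q0_der; auto. lra.
Qed.

Lemma term_int a z k :
  is_RInt (fun t => qc a k * (z * sin t ^ 2) ^ k) (-PI/2) (PI/2) (qc a k * z ^ k * (PI * poch (1/2) k / INR (fact k))).
Proof.
  pose proof (is_RInt_scal _ _ _ (qc a k * z ^ k) _ (wallis k)) as H.
  eapply is_RInt_ext; [|exact H].
  intros x _. unfold scal; simpl; unfold mult; simpl.
  change (sin x * (sin x * 1)) with (sin x ^ 2). replace (k + (k + 0))%nat with (2 * k)%nat by lia. rewrite Rpow_mult_distr, pow_mult. ring.
Qed.

Lemma partial_int a z N :
  is_RInt (fun t => sum_f_R0 (fun k => qc a k * (z * sin t ^ 2) ^ k) N) (-PI/2) (PI/2)
    (sum_f_R0 (fun k => qc a k * z ^ k * (PI * poch (1/2) k / INR (fact k))) N).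
Proof.
  induction N.
  - apply term_int.
  - pose proof (is_RInt_plus _ _ _ _ _ _ IHN (term_int a z (S N))) as H.
    exact H.
Qed.
Lemma series_int a z : a * a <= 3 -> 0 <= z < 1 ->
  infinite_sum (fun n => qc a n * z ^ n * (PI * poch (1/2) n / INR (fact n)))
    (RInt (fun t => Q0 a (z * sin t ^ 2)) (-PI/2) (PI/2)).
Proof.
  intros Ha Hz eps He.
  assert (HPI := PI_RGT_0).
  destruct (pow_lt_1_zero z ltac:(rewrite Rabs_right; lra) (eps * (1 - z) / PI)) as [N0 HN0].
  { apply Rmult_lt_0_compat. apply Rmult_lt_0_compat; lra. apply Rinv_0_lt_compat; lra. }
  exists N0. intros n Hn.
  set (F := fun t => Q0 a (z * sin t ^ 2)).
  set (P := fun t => sum_f_R0 (fun k => qc a k * (z * sin t ^ 2) ^ k) n).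
  assert (EF : ex_RInt F (-PI/2) (PI/2)).
  { apply (ex_RInt_continuous (V := R_CompleteNormedModule)). intros. apply exd_cont, Fz_exd; auto. }
  assert (EP : ex_RInt P (-PI/2) (PI/2)) by (eexists; apply partial_int).
  rewrite <- (is_RInt_unique _ _ _ _ (partial_int a z n)).
  fold P. unfold Rdist. rewrite Rabs_minus_sym.
  replace (RInt F (- PI / 2) (PI / 2) - RInt P (- PI / 2) (PI / 2))
    with (RInt (fun t => F t - P t) (- PI / 2) (PI / 2)).
  2:{ rewrite (RInt_minus (V := R_CompleteNormedModule)) by assumption. reflexivity. }
  apply Rle_lt_trans with ((PI/2 - - PI/2) * (z ^ S n / (1 - z))).
  - apply (abs_RInt_le_const (fun t => F t - P t)). lra. apply (ex_RInt_minus (V := R_NormedModule)); assumption.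
    intros t _. unfold F, P. apply Q0_tail; [exact Ha|exact Hz|apply zsin_bound; exact Hz].
  - specialize (HN0 (S n) ltac:(lia)).
    rewrite Rabs_right in HN0 by (apply Rle_ge, pow_le; lra).
    replace (PI / 2 - - PI / 2) with PI by field.
    apply Rmult_lt_compat_l with (r := PI) in HN0; auto.
    replace (PI * (eps * (1 - z) / PI)) with (eps * (1 - z)) in HN0 by (field; lra).
    apply Rmult_lt_reg_r with (1 - z). lra.
    replace (PI * (z ^ S n / (1 - z)) * (1 - z)) with (PI * z ^ S n) by (field; lra). lra.
Qed.


Lemma cont_pt (g : R -> R) x : continuous g x -> continuity_pt g x.
Proof. intro H. apply continuity_pt_filterlim. exact H. Qed.

Lemma ivt_inc (g : R -> R) a b y : (forall t, continuous g t) -> a < b -> g a < y < g b ->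
  exists t, a < t < b /\ g t = y.
Proof.
  intros Hc Hab Hy.
  assert (C : continuity (fun t => g t - y)).
  { intro t. apply (continuity_pt_minus g (fun _ => y)). apply cont_pt, Hc. apply continuity_pt_const. intros u v; auto. }
  destruct (IVT (fun t => g t - y) a b C Hab) as [t [Ht Hgt]]; simpl; try lra.
  exists t. assert (g t = y) by lra. split; auto.
  split; destruct Ht as [H1 H2]; destruct H1 as [H1|H1]; destruct H2 as [H2|H2]; subst; try lra.
Qed.

Lemma cont_eps (g : R -> R) x : continuous g x -> forall eps, 0 < eps -> exists d, 0 < d /\
  forall y, Rabs (y - x) < d -> Rabs (g y - g x) < eps.
Proof.
  intros Hc eps He. apply cont_pt in Hc.
  destruct (Hc eps He) as [d [Hd Hy]]. exists d. split; auto. intros y Hyx.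
  destruct (Req_dec y x) as [->|Hne]. rewrite Rminus_diag, Rabs_R0; auto.
  apply Hy. split. split. exact I. auto. exact Hyx.
Qed.

Lemma improper_subst (f H xx dxx : R -> R) (p q : R) :
  p < q ->
  (forall t, is_derive xx t (dxx t)) -> (forall t, continuous dxx t) ->
  (forall a b, p <= a -> a < b -> b <= q -> xx a < xx b) ->
  (forall t, p < t < q -> continuous f (xx t)) ->
  (forall t, p < t < q -> dxx t * f (xx t) = H t) ->
  (forall t, continuous H t) ->
  improper_int f (xx p) (xx q) (RInt H p q).
Proof.
  intros Hpq Hd Hdc Hinc Hf HH HHc.
  assert (Hxc : forall t, continuous xx t).
  { intro t. apply exd_cont. exists (dxx t). apply Hd. }
  assert (EH : forall a b, ex_RInt H a b).
  { intros a b. apply (ex_RInt_continuous (V := R_CompleteNormedModule)). intros; apply HHc. }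
  set (Phi := fun t => RInt H p t).
  assert (HPhi : forall t, continuous Phi t).
  { intro t. apply exd_cont. exists (H t). apply (is_derive_RInt (V := R_NormedModule) H Phi p t).
    apply filter_forall. intro b0. apply (RInt_correct (V := R_CompleteNormedModule)). apply EH. apply HHc. }
  intros eps He.
  destruct (cont_eps Phi p (HPhi p) (eps/2) ltac:(lra)) as [d1 [Hd1 H1]].
  destruct (cont_eps Phi q (HPhi q) (eps/2) ltac:(lra)) as [d2 [Hd2 H2]].
  set (de := Rmin (Rmin d1 d2) ((q - p)/4)).
  assert (Hde : 0 < de /\ de <= d1 /\ de <= d2 /\ de <= (q-p)/4).
  { unfold de, Rmin. repeat destruct Rle_dec; lra. }
  assert (HL : xx p < xx (p + de)) by (apply Hinc; lra).
  assert (HR : xx (q - de) < xx q) by (apply Hinc; lra).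
  assert (HM : xx (p + de) < xx (q - de)) by (apply Hinc; lra).
  exists (Rmin (xx (p + de) - xx p) (xx q - xx (q - de))).
  split. { unfold Rmin; destruct Rle_dec; lra. }
  intros u v Hu Hv.
  assert (Hu' : xx p < u < xx (p + de)) by (unfold Rmin in Hu; destruct Rle_dec in Hu; lra).
  assert (Hv' : xx (q - de) < v < xx q) by (unfold Rmin in Hv; destruct Rle_dec in Hv; lra).
  destruct (ivt_inc xx p (p + de) u Hxc ltac:(lra) Hu') as [tu [Htu Hxu]].
  destruct (ivt_inc xx (q - de) q v Hxc ltac:(lra) Hv') as [tv [Htv Hxv]].
  assert (Htuv : p < tu < tv /\ tv < q) by lra.
  assert (C1 : forall x, Rmin tu tv <= x <= Rmax tu tv -> continuous f (xx x)).
  { intros x Hx. apply Hf. unfold Rmin, Rmax in Hx; destruct Rle_dec in Hx; lra. }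
  assert (C2 : forall x, Rmin tu tv <= x <= Rmax tu tv -> is_derive xx x (dxx x) /\ continuous dxx x).
  { intros x Hx. split; [apply Hd | apply Hdc]. }
  pose proof (RInt_comp (V := R_CompleteNormedModule) f xx dxx tu tv C1 C2) as Hcomp.
  assert (Hfuv : ex_RInt f u v).
  { apply (ex_RInt_continuous (V := R_CompleteNormedModule)). intros x Hx.
    assert (Hx' : u <= x <= v) by (unfold Rmin, Rmax in Hx; destruct Rle_dec in Hx; lra).
    destruct (Req_dec x u) as [->|Hxu'].
    { rewrite <- Hxu. apply Hf. lra. }
    destruct (Req_dec x v) as [->|Hxv'].
    { rewrite <- Hxv. apply Hf. lra. }
    destruct (ivt_inc xx tu tv x Hxc ltac:(lra) ltac:(lra)) as [t [Ht Hxt]].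
    rewrite <- Hxt. apply Hf. lra. }
  exists (ex_RInt_Reals_0 _ _ _ Hfuv). rewrite <- RInt_Reals.
  rewrite <- Hxu, <- Hxv, <- Hcomp.
  rewrite (RInt_ext _ H).
  2:{ intros x Hx. unfold Rmin, Rmax in Hx; destruct Rle_dec in Hx; try lra.
      rewrite <- HH by lra. reflexivity. }
  assert (Ch1 := RInt_Chasles (V := R_CompleteNormedModule) H p tu tv (EH _ _) (EH _ _)).
  assert (Ch2 := RInt_Chasles (V := R_CompleteNormedModule) H p tv q (EH _ _) (EH _ _)).
  change (plus (RInt H p tu) (RInt H tu tv) = RInt H p tv) in Ch1.
  change (RInt H p tu + RInt H tu tv = RInt H p tv) in Ch1.
  change (RInt H p tv + RInt H tv q = RInt H p q) in Ch2.
  assert (A1 : Rabs (Phi tu - Phi p) < eps/2) by (apply H1; rewrite Rabs_right; lra).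
  assert (A2 : Rabs (Phi tv - Phi q) < eps/2) by (apply H2; rewrite Rabs_left; lra).
  unfold Phi in A1, A2 |- *.
  rewrite (RInt_point (V := R_CompleteNormedModule)) in A1.
  change (zero : R) with 0 in A1.
  replace (RInt H tu tv - RInt H p q) with ((RInt H p tv - RInt H p q) + - (RInt H p tu - 0)) by lra.
  eapply Rle_lt_trans. apply Rabs_triang.
  rewrite Rabs_Ropp. lra.
Qed.


Lemma asin_der y : -1 < y < 1 -> is_derive asin y (1 / sqrt (1 - y²)).
Proof.
  intros Hy. apply is_derive_Reals. apply (derive_pt_eq_1 _ _ _ (derivable_pt_asin y Hy)).
  apply derive_pt_asin.
Qed.

Definition bet r t := asin (r * sin t).

Lemma rsin_bound r t : 0 < r < 1 -> -1 < r * sin t < 1.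
Proof. intros Hr. pose proof (SIN_bound t). split; nra. Qed.

Lemma cos_bet r t : 0 < r < 1 -> cos (bet r t) = sqrt (1 - (r * sin t)²) /\ 0 < cos (bet r t).
Proof.
  intros Hr. pose proof (rsin_bound r t Hr). unfold bet. rewrite cos_asin by lra.
  split; auto. apply sqrt_lt_R0. unfold Rsqr. nra.
Qed.

Lemma sin_bet r t : 0 < r < 1 -> sin (bet r t) = r * sin t.
Proof. intros Hr. pose proof (rsin_bound r t Hr). unfold bet. rewrite sin_asin; lra. Qed.

Lemma bet_range r t : 0 < r < 1 -> - (PI/2) < bet r t < PI/2.
Proof. intros Hr. apply asin_bound_lt, rsin_bound; auto. Qed.

Lemma bet_der r t : 0 < r < 1 -> is_derive (bet r) t (r * cos t / cos (bet r t)).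
Proof.
  intros Hr. pose proof (rsin_bound r t Hr). destruct (cos_bet r t Hr) as [Hc Hc0].
  unfold bet.
  assert (Hg : is_derive (fun t => r * sin t) t (r * cos t)).
  { auto_derive. auto. ring. }
  pose proof (is_derive_comp asin (fun t => r * sin t) t _ _ (asin_der (r * sin t) ltac:(lra)) Hg) as HH.
  replace (r * cos t / cos (asin (r * sin t))) with (scal (r * cos t) (1 / sqrt (1 - (r * sin t)²))).
  exact HH.
  unfold bet in Hc, Hc0. rewrite Hc. unfold scal; simpl; unfold mult; simpl. field.
  rewrite <- Hc. lra.
Qed.

Definition al r t := (2 * PI - 2 * bet r t) / 3.
Definition xx r t := 2 * cos (al r t).
Definition dxx r t := 4/3 * sin (al r t) * (r * cos t / cos (bet r t)).

Lemma Dbet r t : 0 < r < 1 -> Derive (fun x : R => bet r x) t = r * cos t / cos (bet r t).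
Proof. intros; apply is_derive_unique, bet_der; auto. Qed.

Lemma xx_der r t : 0 < r < 1 -> is_derive (xx r) t (dxx r t).
Proof.
  intros Hr. unfold xx, al, dxx.
  auto_derive. exists (r * cos t / cos (bet r t)); apply bet_der; auto.
  rewrite Dbet by auto. unfold al. replace ((2 * PI + - (2 * bet r t)) * / 3) with ((2 * PI - 2 * bet r t) / 3) by field. field. apply Rgt_not_eq, (cos_bet r t Hr).
Qed.

Lemma dxx_cont r t : 0 < r < 1 -> continuous (dxx r) t.
Proof.
  intros Hr. apply exd_cont. unfold dxx, al.
  auto_derive. repeat split; try (exists (r * cos t / cos (bet r t)); apply bet_der; auto).
  apply Rgt_not_eq, (cos_bet r t Hr).
Qed.

Lemma al_range r t : 0 < r < 1 -> PI / 3 < al r t < PI.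
Proof. intros Hr. pose proof (bet_range r t Hr). unfold al. lra. Qed.

Lemma dxx_pos r t : 0 < r < 1 -> -(PI/2) < t < PI/2 -> 0 < dxx r t.
Proof.
  intros Hr Ht. unfold dxx.
  pose proof (al_range r t Hr). assert (0 < sin (al r t)) by (apply sin_gt_0; lra).
  assert (0 < cos t) by (apply cos_gt_0; lra).
  destruct (cos_bet r t Hr) as [_ Hc].
  apply Rmult_lt_0_compat. lra. apply Rmult_lt_0_compat. nra. apply Rinv_0_lt_compat; auto.
Qed.

Lemma xx_inc r a b : 0 < r < 1 -> -(PI/2) <= a -> a < b -> b <= PI/2 -> xx r a < xx r b.
Proof.
  intros Hr Ha Hab Hb.
  set (pr := fun t => exist (fun l => derivable_pt_lim (xx r) t l) (dxx r t) (proj1 (is_derive_Reals _ _ _) (xx_der r t Hr))).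
  destruct (MVT_cor1 (xx r) a b pr Hab) as [c [Hc Hc']].
  assert (derive_pt (xx r) c (pr c) = dxx r c) by reflexivity.
  pose proof (dxx_pos r c Hr ltac:(lra)). nra.
Qed.

Lemma sc_trick s c L R k : s * s + c * c = 1 -> L - R = k * (s * s + c * c - 1) -> L = R.
Proof. intros H1 H2. rewrite H1 in H2. lra. Qed.

Lemma cos3 x : cos (3 * x) = 4 * cos x ^ 3 - 3 * cos x.
Proof.
  replace (3 * x) with (2 * x + x) by ring. rewrite cos_plus, cos_2a, sin_2a.
  pose proof (sin2_cos2 x) as H. unfold Rsqr in H.
  apply (sc_trick (sin x) (cos x) _ _ (- 3 * cos x) H). ring.
Qed.

Lemma cubic_xx psi r t : 0 < r < 1 -> r ^ 2 = (psi + 2) / 4 -> cubic psi (xx r t) = 16 * r ^ 2 * cos t ^ 2.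
Proof.
  intros Hr Hz. unfold cubic, xx.
  assert (H3 : cos (3 * al r t) = 1 - 2 * (r * sin t) ^ 2).
  { unfold al. replace (3 * ((2 * PI - 2 * bet r t) / 3)) with (2 * PI - 2 * bet r t) by field.
    rewrite cos_minus, cos_2PI, sin_2PI, cos_2a_sin, sin_bet by auto. ring. }
  rewrite cos3 in H3.
  pose proof (sin2_cos2 t). unfold Rsqr in H.
  replace (4 * (2 * cos (al r t)) ^ 3 - 12 * (2 * cos (al r t)) + 4 * psi) with
    (8 * (4 * cos (al r t) ^ 3 - 3 * cos (al r t)) + 4 * psi) by ring.
  rewrite H3. replace psi with (4 * r ^ 2 - 2) by lra.
  apply (sc_trick (sin t) (cos t) _ _ (- 16 * r ^ 2) H). ring.
Qed.

Lemma sqrt_cubic_xx psi r t : 0 < r < 1 -> r ^ 2 = (psi + 2) / 4 -> 0 <= cos t ->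
  sqrt (cubic psi (xx r t)) = 4 * r * cos t.
Proof.
  intros Hr Hz Hc. rewrite cubic_xx by auto.
  replace (16 * r ^ 2 * cos t ^ 2) with ((4 * r * cos t) * (4 * r * cos t)) by ring.
  apply sqrt_square. nra.
Qed.

Definition H1 r t := 2/3 * sin (al r t) / cos (bet r t).
Definition H2 r t := xx r t * H1 r t.

Lemma sin_2PI3 : sin (2 * PI / 3) = sqrt 3 / 2.
Proof. replace (2 * PI / 3) with (PI - PI / 3) by field. rewrite sin_PI_x. apply sin_PI3. Qed.
Lemma cos_2PI3 : cos (2 * PI / 3) = - (1 / 2).
Proof. replace (2 * PI / 3) with (PI - PI / 3) by field. rewrite cos_minus, cos_PI, sin_PI, cos_PI3. ring. Qed.
Lemma sin_4PI3 : sin (4 * PI / 3) = - (sqrt 3 / 2).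
Proof. replace (4 * PI / 3) with (PI + PI / 3) by field. rewrite sin_plus, cos_PI, sin_PI, sin_PI3. ring. Qed.
Lemma cos_4PI3 : cos (4 * PI / 3) = - (1 / 2).
Proof. replace (4 * PI / 3) with (PI + PI / 3) by field. rewrite cos_plus, cos_PI, sin_PI, cos_PI3. ring. Qed.

Lemma inv_sqrt3 : / sqrt 3 = sqrt 3 / 3.
Proof.
  assert (H : sqrt 3 * sqrt 3 = 3) by (apply sqrt_sqrt; lra).
  assert (0 < sqrt 3) by (apply sqrt_lt_R0; lra).
  apply (Rmult_eq_reg_l (sqrt 3)); [|lra]. rewrite Rinv_r by lra.
  replace (sqrt 3 * (sqrt 3 / 3)) with (sqrt 3 * sqrt 3 / 3) by field. rewrite H. field.
Qed.

Lemma cos_a_bet a r t : a * a <= 3 -> a <> 0 -> 0 < r < 1 ->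
  cos (a * bet r t) = Q0 a (r ^ 2 * sin t ^ 2) * cos (bet r t).
Proof.
  intros Ha Ha0 Hr. rewrite <- UU_cos; auto. unfold UU. rewrite sin_bet by auto.
  rewrite Rpow_mult_distr. reflexivity. pose proof (bet_range r t Hr). lra.
Qed.

Lemma H1_decomp r t : 0 < r < 1 ->
  H1 r t = / sqrt 3 * Q0 (2/3) (r ^ 2 * sin t ^ 2) + / 3 * (sin (2/3 * bet r t) / cos (bet r t)).
Proof.
  intros Hr. destruct (cos_bet r t Hr) as [_ Hc].
  unfold H1. replace (al r t) with (2 * PI / 3 - 2/3 * bet r t) by (unfold al; field).
  rewrite sin_minus, sin_2PI3, cos_2PI3, cos_a_bet by (auto; lra).
  rewrite inv_sqrt3. field. lra.
Qed.

Lemma H2_decomp r t : 0 < r < 1 ->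
  H2 r t = - (/ sqrt 3 * Q0 (4/3) (r ^ 2 * sin t ^ 2)) + / 3 * (sin (4/3 * bet r t) / cos (bet r t)).
Proof.
  intros Hr. destruct (cos_bet r t Hr) as [_ Hc].
  unfold H2, H1, xx.
  replace (2 * cos (al r t) * (2 / 3 * sin (al r t) / cos (bet r t))) with
    (2/3 * sin (2 * al r t) / cos (bet r t)) by (rewrite sin_2a; field; lra).
  replace (2 * al r t) with (4 * PI / 3 - 4/3 * bet r t) by (unfold al; field).
  rewrite sin_minus, sin_4PI3, cos_4PI3, cos_a_bet by (auto; lra).
  rewrite inv_sqrt3. field. lra.
Qed.

Lemma odd_int (g : R -> R) c : (forall t, continuous g t) -> (forall t, g (- t) = - g t) ->
  RInt g (- c) c = 0.
Proof.
  intros Hc Hodd.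
  assert (E : forall a b, ex_RInt g a b).
  { intros a b. apply (ex_RInt_continuous (V := R_CompleteNormedModule)). intros; apply Hc. }
  pose proof (RInt_comp_lin (V := R_CompleteNormedModule) g (-1) 0 (- c) c (E _ _)) as H.
  replace (-1 * - c + 0) with c in H by ring.
  replace (-1 * c + 0) with (- c) in H by ring.
  rewrite <- (opp_RInt_swap (V := R_CompleteNormedModule) g (- c) c (E _ _)) in H.
  rewrite (RInt_ext _ g) in H.
  - change (opp (RInt g (- c) c)) with (- RInt g (- c) c) in H. lra.
  - intros x _. unfold scal; simpl; unfold mult; simpl. replace (-1 * x + 0) with (- x) by ring.
    rewrite Hodd. ring.
Qed.

Lemma bet_opp r t : bet r (- t) = - bet r t.
Proof. unfold bet. rewrite sin_neg, <- asin_opp. f_equal. ring. Qed.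

Lemma odd_part_cont k r t : 0 < r < 1 -> continuous (fun t => sin (k * bet r t) / cos (bet r t)) t.
Proof.
  intros Hr. apply exd_cont. auto_derive. repeat split; try (exists (r * cos t / cos (bet r t)); apply bet_der; auto).
  apply Rgt_not_eq, (cos_bet r t Hr).
Qed.

Lemma odd_part_int k r : 0 < r < 1 ->
  RInt (fun t => sin (k * bet r t) / cos (bet r t)) (-(PI/2)) (PI/2) = 0.
Proof.
  intros Hr. apply odd_int. intro; apply odd_part_cont; auto.
  intro t. rewrite bet_opp. replace (k * - bet r t) with (- (k * bet r t)) by ring.
  rewrite sin_neg, cos_neg. field. apply Rgt_not_eq, (cos_bet r t Hr).
Qed.

Lemma Qpart_cont a r t : a * a <= 3 -> 0 < r < 1 -> continuous (fun t => Q0 a (r ^ 2 * sin t ^ 2)) t.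
Proof.
  intros Ha Hr. apply exd_cont. apply (Fz_exd a (r ^ 2) t Ha). split. nra.
  nra.
Qed.


Lemma H_int_gen (H : R -> R) (c k : R) a r : a * a <= 3 -> 0 < r < 1 ->
  (forall t, H t = c * Q0 a (r ^ 2 * sin t ^ 2) + / 3 * (sin (k * bet r t) / cos (bet r t))) ->
  RInt H (-(PI/2)) (PI/2) = c * RInt (fun t => Q0 a (r ^ 2 * sin t ^ 2)) (-(PI/2)) (PI/2).
Proof.
  intros Ha Hr HH.
  set (Qp := fun t => Q0 a (r ^ 2 * sin t ^ 2)).
  set (Op := fun t => sin (k * bet r t) / cos (bet r t)).
  assert (EA : ex_RInt Qp (-(PI/2)) (PI/2)).
  { apply (ex_RInt_continuous (V := R_CompleteNormedModule)). intros; apply Qpart_cont; auto. }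
  assert (EB : ex_RInt Op (-(PI/2)) (PI/2)).
  { apply (ex_RInt_continuous (V := R_CompleteNormedModule)). intros; apply odd_part_cont; auto. }
  pose proof (RInt_correct (V := R_CompleteNormedModule) _ _ _ EA) as A.
  pose proof (RInt_correct (V := R_CompleteNormedModule) _ _ _ EB) as B.
  unfold Op in B. rewrite odd_part_int in B by auto. fold Op in B.
  pose proof (is_RInt_plus _ _ _ _ _ _ (is_RInt_scal _ _ _ c _ A) (is_RInt_scal _ _ _ (/ 3) _ B)) as C.
  apply is_RInt_unique.
  eapply is_RInt_ext; [|replace (c * RInt Qp (- (PI / 2)) (PI / 2)) with
     (plus (scal c (RInt Qp (- (PI / 2)) (PI / 2))) (scal (/ 3) 0)); [exact C|]].
  - intros x _. rewrite HH. unfold Qp, Op, plus, scal; simpl; unfold mult; simpl. reflexivity.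
  - unfold plus, scal; simpl; unfold mult; simpl. ring.
Qed.


Lemma poch1 n : poch 1 n = INR (fact n).
Proof. induction n; simpl poch. reflexivity. rewrite IHn, fact_simpl, mult_INR, S_INR. ring. Qed.

Lemma term_eq a A B z n : A = (1 - a) / 2 -> B = (1 + a) / 2 ->
  qc a n * z ^ n * (PI * poch (1/2) n / INR (fact n)) / PI = hyp_term A B 1 z n.
Proof.
  intros -> ->. unfold qc, hyp_term. rewrite poch1.
  pose proof (poch_pos_half n). pose proof (INR_fact_pos n). pose proof PI_RGT_0.
  field. repeat split; lra.
Qed.

Lemma hyp_from_int a A B z : a * a <= 3 -> 0 <= z < 1 -> A = (1 - a) / 2 -> B = (1 + a) / 2 ->
  hyp2F1 A B 1 z (RInt (fun t => Q0 a (z * sin t ^ 2)) (-(PI/2)) (PI/2) / PI).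
Proof.
  intros Ha Hz HA HB. unfold hyp2F1.
  pose proof (series_int a z Ha Hz) as H.
  replace (-PI/2) with (-(PI/2)) in H by field.
  apply is_series_Reals in H.
  pose proof (is_series_scal_l (/ PI) _ _ H) as H'.
  apply is_series_Reals.
  eapply is_series_ext; [|replace (RInt (fun t => Q0 a (z * sin t ^ 2)) (- (PI / 2)) (PI / 2) / PI) with
     (scal (/ PI) (RInt (fun t : R => Q0 a (z * sin t ^ 2)) (- (PI / 2)) (PI / 2))); [exact H'|]].
  - intro n. rewrite <- (term_eq a A B z n HA HB). unfold scal; simpl; unfold mult; simpl. unfold Rdiv. ring.
  - unfold scal; simpl; unfold mult; simpl. unfold Rdiv. ring.
Qed.

Lemma cubic_fact psi a b x : a <> b -> cubic psi a = 0 -> cubic psi b = 0 ->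
  cubic psi x = 4 * (x - a) * (x - b) * (x + a + b).
Proof.
  unfold cubic. intros Hab Ha Hb.
  assert (K : a * a + a * b + b * b - 3 = 0).
  { assert (4 * (a - b) * (a * a + a * b + b * b - 3) = 0) by nra.
    apply Rmult_integral in H. destruct H as [H|H]; auto.
    apply Rmult_integral in H. destruct H; lra. }
  assert (Hp : psi = 3 * a - a ^ 3) by nra.
  subst psi. apply Rminus_diag_uniq.
  replace (4 * x ^ 3 - 12 * x + 4 * (3 * a - a ^ 3) - 4 * (x - a) * (x - b) * (x + a + b))
    with (4 * (x - a) * (a * a + a * b + b * b - 3)) by ring.
  rewrite K. ring.
Qed.

Lemma roots_ident psi a b e1 e2 : a < b -> cubic psi a = 0 -> cubic psi b = 0 ->
  (forall x, a < x < b -> cubic psi x > 0) -> e1 < e2 -> cubic psi e1 = 0 -> cubic psi e2 = 0 ->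
  (forall x, e1 < x < e2 -> cubic psi x > 0) -> e1 = a /\ e2 = b.
Proof.
  intros Hab Ha Hb Hpos H12 H1 H2 Hpos'.
  set (c := - (a + b)).
  assert (F : forall x, cubic psi x = 4 * (x - a) * (x - b) * (x - c)).
  { intro x. rewrite (cubic_fact psi a b x) by (auto; lra). unfold c. ring. }
  assert (Hc : b <= c).
  { destruct (Rle_dec b c) as [|Hn]; auto. exfalso.
    set (x := (Rmax a c + b) / 2).
    assert (Rmax a c < b) by (unfold Rmax; destruct Rle_dec; lra).
    assert (a <= Rmax a c /\ c <= Rmax a c) by (unfold Rmax; destruct Rle_dec; lra).
    specialize (Hpos x ltac:(unfold x; lra)). rewrite F in Hpos.
    assert (0 < x - a) by (unfold x; lra). assert (x - b < 0) by (unfold x; lra).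
    assert (0 < x - c) by (unfold x; lra).
    assert (0 < (x - a) * (c - x) ) by nra. nra. }
  assert (R : forall e, cubic psi e = 0 -> e = a \/ e = b \/ e = c).
  { intros e He. rewrite F in He. apply Rmult_integral in He. destruct He as [He|He].
    apply Rmult_integral in He. destruct He as [He|He].
    apply Rmult_integral in He. destruct He as [He|He]. lra. left; lra. right; left; lra. right; right; lra. }
  destruct (R e1 H1) as [E1|[E1|E1]]; destruct (R e2 H2) as [E2|[E2|E2]]; subst e1 e2; try lra.
  - destruct (Req_dec c b) as [Ecb|Ncb]. split; lra. exfalso.
    specialize (Hpos' b ltac:(lra)). lra.
  - exfalso. set (x := (b + c) / 2). specialize (Hpos' x ltac:(unfold x; lra)). rewrite F in Hpos'.
    assert (0 < x - a) by (unfold x; lra). assert (0 < x - b) by (unfold x; lra).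
    assert (x - c < 0) by (unfold x; lra).
    assert (0 < (x - a) * (x - b)) by nra. nra.
Qed.

Lemma f1_cont psi x : 0 < cubic psi x -> continuous (fun x => 2 / sqrt (cubic psi x)) x.
Proof.
  intros H. apply exd_cont. unfold cubic in *. auto_derive. split. auto. split; auto.
  apply Rgt_not_eq, sqrt_lt_R0. auto.
Qed.

Lemma f2_cont psi x : 0 < cubic psi x -> continuous (fun x => 2 * x / sqrt (cubic psi x)) x.
Proof.
  intros H. apply exd_cont. unfold cubic in *. auto_derive. split. auto. split; auto.
  apply Rgt_not_eq, sqrt_lt_R0. auto.
Qed.

Lemma H1_cont r t : 0 < r < 1 -> continuous (H1 r) t.
Proof.
  intros Hr. apply exd_cont. unfold H1, al. auto_derive.
  repeat split; try (exists (r * cos t / cos (bet r t)); apply bet_der; auto).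
  apply Rgt_not_eq, (cos_bet r t Hr).
Qed.

Lemma H2_cont r t : 0 < r < 1 -> continuous (H2 r) t.
Proof.
  intros Hr. apply exd_cont. unfold H2, H1, xx, al. auto_derive.
  repeat split; try (exists (r * cos t / cos (bet r t)); apply bet_der; auto).
  apply Rgt_not_eq, (cos_bet r t Hr).
Qed.

Theorem mainTheorem12 (psi e1 e2 : R) :
  -2 < psi < 2 ->
  e1 < e2 -> cubic psi e1 = 0 -> cubic psi e2 = 0 ->
  (forall x, e1 < x < e2 -> cubic psi x > 0) ->
  exists S1 S2 : R,
    hyp2F1 (1/6) (5/6) 1 ((psi + 2) / 4) S1 /\
    hyp2F1 (-1/6) (7/6) 1 ((psi + 2) / 4) S2 /\
    improper_int (fun x => 2 / sqrt (cubic psi x)) e1 e2 (PI / sqrt 3 * S1) /\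
    improper_int (fun x => 2 * x / sqrt (cubic psi x)) e1 e2 (- (PI / sqrt 3 * S2)).
Proof.
  intros Hpsi H12 He1 He2 Hpos.
  set (z := (psi + 2) / 4).
  assert (Hz : 0 < z < 1) by (unfold z; lra).
  set (r := sqrt z).
  assert (Hr2 : r ^ 2 = z) by (unfold r; simpl; rewrite Rmult_1_r; apply sqrt_sqrt; lra).
  assert (Hr : 0 < r < 1).
  { unfold r. split. apply sqrt_lt_R0; lra. rewrite <- sqrt_1. apply sqrt_lt_1_alt. lra. }
  assert (Hr2' : r ^ 2 = (psi + 2) / 4) by exact Hr2.
  assert (PI0 := PI_RGT_0).
  set (p := -(PI/2)). set (q := PI/2).
  assert (Hpq : p < q) by (unfold p, q; lra).
  assert (Hca : cubic psi (xx r p) = 0).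
  { rewrite cubic_xx by auto. unfold p. rewrite cos_neg, cos_PI2. ring. }
  assert (Hcb : cubic psi (xx r q) = 0).
  { rewrite cubic_xx by auto. unfold q. rewrite cos_PI2. ring. }
  assert (Hab : xx r p < xx r q) by (apply xx_inc; unfold p, q; auto; lra).
  assert (Hcont : forall t, continuous (xx r) t).
  { intro t. apply exd_cont. exists (dxx r t). apply xx_der; auto. }
  assert (Hint : forall t, p < t < q -> 0 < cubic psi (xx r t)).
  { intros t Ht. rewrite cubic_xx by auto. assert (0 < cos t) by (apply cos_gt_0; unfold p, q in Ht; lra).
    assert (0 < r ^ 2) by nra. assert (0 < cos t ^ 2) by nra. nra. }
  assert (Hposab : forall x, xx r p < x < xx r q -> cubic psi x > 0).
  { intros x Hx. destruct (ivt_inc (xx r) p q x Hcont Hpq Hx) as [t [Ht <-]]. apply Hint; auto. }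
  destruct (roots_ident psi _ _ e1 e2 Hab Hca Hcb Hposab H12 He1 He2 Hpos) as [-> ->].
  assert (Hinc : forall a b, p <= a -> a < b -> b <= q -> xx r a < xx r b).
  { intros a b Ha Hab' Hb. apply xx_inc; unfold p, q in *; auto; lra. }
  assert (Hsq : forall t, p < t < q -> sqrt (cubic psi (xx r t)) = 4 * r * cos t /\ 0 < cos t).
  { intros t Ht. assert (0 < cos t) by (apply cos_gt_0; unfold p, q in Ht; lra).
    split; auto. apply sqrt_cubic_xx; auto; lra. }
  set (S1 := RInt (fun t => Q0 (2/3) (z * sin t ^ 2)) (-(PI/2)) (PI/2) / PI).
  set (S2 := RInt (fun t => Q0 (4/3) (z * sin t ^ 2)) (-(PI/2)) (PI/2) / PI).
  assert (HS3 : 0 < sqrt 3) by (apply sqrt_lt_R0; lra).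
  exists S1, S2. split; [|split; [|split]].
  - apply hyp_from_int; try lra.
  - apply hyp_from_int; try lra.
  - replace (PI / sqrt 3 * S1) with (RInt (H1 r) p q).
    + apply (improper_subst _ _ _ (dxx r)); auto.
      * intro; apply xx_der; auto.
      * intro; apply dxx_cont; auto.
      * intros t Ht. apply f1_cont, Hint; auto.
      * intros t Ht. destruct (Hsq t Ht) as [Hs Hc]. rewrite Hs. unfold dxx, H1.
        destruct (cos_bet r t Hr) as [_ Hcb0]. field. lra.
      * intro; apply H1_cont; auto.
    + unfold p, q. rewrite (H_int_gen (H1 r) (/ sqrt 3) (2/3) (2/3) r); auto; try lra.
      2:{ intro t. apply H1_decomp; auto. }
      unfold S1. rewrite Hr2.
      assert (E : forall I : R, / sqrt 3 * I = PI / sqrt 3 * (I / PI)) by (intro; field; lra). apply E.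
  - replace (- (PI / sqrt 3 * S2)) with (RInt (H2 r) p q).
    + apply (improper_subst _ _ _ (dxx r)); auto.
      * intro; apply xx_der; auto.
      * intro; apply dxx_cont; auto.
      * intros t Ht. apply f2_cont, Hint; auto.
      * intros t Ht. destruct (Hsq t Ht) as [Hs Hc]. rewrite Hs. unfold dxx, H2, H1.
        destruct (cos_bet r t Hr) as [_ Hcb0]. field. lra.
      * intro; apply H2_cont; auto.
    + unfold p, q. rewrite (H_int_gen (H2 r) (- / sqrt 3) (4/3) (4/3) r); auto; try lra.
      2:{ intro t. rewrite H2_decomp; auto. ring. }
      unfold S2. rewrite Hr2.
      assert (E : forall I : R, - / sqrt 3 * I = - (PI / sqrt 3 * (I / PI))) by (intro; field; lra). apply E.
Qed.
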